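(* Let $\mathcal A=\{\ell_1,\dots,\ell_n\}$ be an arrangement of affine lines in $\mathbb C^2$, and let $\langle\beta_1,\dots,\beta_n\mid R_1,\dots,R_\nu\rangle$ be a finite presentation of $\pi_1(M(\mathcal A))$ in which $\beta_i$ is an elementary loop around $\ell_i$. Let $N\subset F_n$ be the normal closure of $R_1,\dots,R_\nu$ in the free group $F_n$ on $\beta_1,\dots,\beta_n$. Then the following are equivalent: (a) the $\mathbb Z[t^{\pm1}]$-submodule of $\mathbb Z[t^{\pm1}]^n$ generated by the vectors $v_j=\big((\partial R_j/\partial\beta_1)^\varphi,\dots,(\partial R_j/\partial\beta_n)^\varphi\big)$, $j=1,\dots,\nu$, equals $(1-t)\{x\in\mathbb Z[t^{\pm1}]^n:\sum_i x_i=0\}$; (b) $[F_n,F_n]=N\,[\ker\varphi,\ker\varphi]$. Equivalently, $\pi_1(M(\mathcal A))$ is abelian modulo the image of $[\ker\varphi,\ker\varphi]$.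
   Context: $M(\mathcal A)=\mathbb C^2\setminus\bigcup\ell_i$. $\varphi:F_n\to\langle t\rangle\cong\mathbb Z$ is the length homomorphism with $\varphi(\beta_i)=t$ for all $i$; it extends to a ring homomorphism $\mathbb Z[F_n]\to\mathbb Z[t^{\pm1}]$, and for $u\in\mathbb Z[F_n]$ we write $u^\varphi$ for its image. $\partial/\partial\beta_i:\mathbb Z[F_n]\to\mathbb Z[F_n]$ are the Fox free derivatives. Commutators are $[a,b]=aba^{-1}b^{-1}$. (Condition (a) is what the paper calls ''$\mathcal A$ is a-monodromic over $\mathbb Z$''.) *)

(* Defs.v *)
From HB Require Import structures.
From mathcomp Require Import all_boot all_order all_algebra.
Set Implicit Arguments. Unset Strict Implicit. Unset Printing Implicit Defensive.
Import Order.TTheory GRing.Theory Num.Theory.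
Local Open Scope ring_scope.

Definition Qt := {fraction {poly int}}.
Definition polyQ (p : {poly int}) : Qt := @FracField.tofrac {poly int} p.
Definition tvar : Qt := polyQ 'X.
Definition laurent (f : Qt) : Prop := exists (p : {poly int}) (k : nat), f = polyQ p * tvar ^- k.
Definition laurent_vec (n : nat) (x : 'rV[Qt]_n) : Prop := forall i, laurent (x 0 i).

(* a letter (i, false) is beta_i, (i, true) is beta_i^{-1} *)
Definition letter (n : nat) := ('I_n * bool)%type.
Definition word (n : nat) := seq (letter n).

Definition linv n (x : letter n) : letter n := (x.1, ~~ x.2).

Fixpoint freduce n (w : word n) : word n :=
  match w with
  | [::] => [::]
  | x :: w' => match freduce w' with
               | y :: r => if y == linv x then r else x :: y :: r
               | [::] => [:: x]
               end
  end.

Definition feq n (u v : word n) : Prop := freduce u = freduce v.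
Definition winv n (w : word n) : word n := rev (map (@linv n) w).
Definition wcomm n (a b : word n) : word n := a ++ b ++ winv a ++ winv b.

Definition in_gen n (S : word n -> Prop) (w : word n) : Prop :=
  exists l : seq (word n * bool),
    (forall p, p \in l -> S p.1) /\
    feq w (flatten (map (fun p => if p.2 then winv p.1 else p.1) l)).

(* length homomorphism phi : F_n -> <t> = Z, phi(beta_i) = t ; exponent sum *)
Definition lsign n (x : letter n) : int := if x.2 then -1 else 1.
Definition expsum n (w : word n) : int := \sum_(x <- w) lsign x.

Definition kerphi n (w : word n) : Prop := expsum w = 0.
Definition commF n : word n -> Prop := in_gen (fun w => exists a b, w = wcomm a b).
Definition commK n : word n -> Prop :=
  in_gen (fun w => exists a b, kerphi a /\ kerphi b /\ w = wcomm a b).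
Definition nclosure n nu (R : 'I_nu -> word n) : word n -> Prop :=
  in_gen (fun w => exists (u : word n) (j : 'I_nu), w = u ++ R j ++ winv u).
Definition NK n nu (R : 'I_nu -> word n) (w : word n) : Prop :=
  exists a b, nclosure R a /\ commK b /\ feq w (a ++ b).

(* (d w / d beta_i)^phi : Fox derivative followed by phi, computed by the
   Fox rules d(uv) = du + u dv, d beta_j/d beta_i = delta_ij,
   d beta_j^{-1}/d beta_i = - delta_ij beta_j^{-1}. *)
Definition phiL n (w : word n) : Qt := tvar ^ (expsum w).
Fixpoint foxphi n (i : 'I_n) (w : word n) : Qt :=
  match w with
  | [::] => 0
  | x :: w' =>
      (if x.1 == i then (if x.2 then - tvar ^ (-1 : int) else 1) else 0)
      + phiL [:: x] * foxphi i w'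
  end.

Definition foxvec n (w : word n) : 'rV[Qt]_n := \row_i foxphi i w.

(* Main.v *)
Require Import Defs.
From HB Require Import structures.
From mathcomp Require Import all_boot all_order all_algebra.
From mathcomp Require Import ring zify.
From Corelib Require Import Setoid Morphisms.
Import Order.TTheory GRing.Theory Num.Theory.
Local Open Scope ring_scope.
Set Implicit Arguments. Unset Strict Implicit. Unset Printing Implicit Defensive.

Definition cred n (x : letter n) (r : word n) : word n :=
  match r with
  | y :: r' => if y == linv x then r' else x :: r
  | [::] => [:: x]
  end.

Lemma freduceE n (w : word n) : freduce w = foldr (@cred n) [::] w.
Proof. by elim: w => //= x w <-; case: (freduce w). Qed.

Fixpoint reduced n (r : word n) : bool :=
  match r with
  | y :: ((z :: _) as r') => (z != linv y) && reduced r'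
  | _ => true
  end.

Lemma linvK n (x : letter n) : linv (linv x) = x.
Proof. by case: x => a b; rewrite /linv /= negbK. Qed.

Lemma reduced_tail n (y : letter n) r : reduced (y :: r) -> reduced r.
Proof. by case: r => // z r /andP[]. Qed.

Lemma cred_red n (x : letter n) r : reduced r -> reduced (cred x r).
Proof.
case: r => [|y r] //= Hr. case: eqP => [_|Hne]; first exact: reduced_tail Hr.
rewrite /=. apply/andP; split=> //. apply/eqP => E; apply: Hne; by rewrite E.
Qed.

Lemma credK n (x : letter n) r : reduced r -> cred x (cred (linv x) r) = r.
Proof.
case: r => [|y r] /= Hr; first by rewrite eqxx.
rewrite linvK; case: eqP => [Ey|Hne].
  subst y. case: r Hr => [|z r] /= Hr; first by [].
  case/andP: Hr => Hz _. by rewrite (negbTE Hz).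
by rewrite /= eqxx.
Qed.

Lemma fold_red n (u : word n) r : reduced r -> reduced (foldr (@cred n) r u).
Proof. elim: u => //= x u IH Hr; exact: cred_red (IH Hr). Qed.

Lemma foldr_cred n (s : word n) r x : reduced s -> reduced r ->
  foldr (@cred n) r (cred x s) = cred x (foldr (@cred n) r s).
Proof.
case: s => [|y s] //= Hs Hr. case: eqP => [Ey|_] //.
subst y. by rewrite credK // fold_red.
Qed.

Lemma fold_freduce n (u : word n) r : reduced r ->
  foldr (@cred n) r u = foldr (@cred n) r (freduce u).
Proof.
move=> Hr; elim: u => [|x u IH] //.
rewrite [in RHS](_ : freduce (x::u) = cred x (freduce u)); last first.
  by rewrite /=; case: (freduce u).
rewrite foldr_cred //= ?IH //. rewrite freduceE; exact: fold_red.
Qed.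

Lemma freduce_red n (u : word n) : reduced (freduce u).
Proof. rewrite freduceE; exact: fold_red. Qed.

Lemma freduce_cat n (u v : word n) :
  freduce (u ++ v) = foldr (@cred n) (freduce v) (freduce u).
Proof.
rewrite [LHS]freduceE foldr_cat -freduceE; apply: fold_freduce; exact: freduce_red.
Qed.

Lemma feq_cat n (u u' v v' : word n) : feq u u' -> feq v v' -> feq (u ++ v) (u' ++ v').
Proof. rewrite /feq => Hu Hv; by rewrite !freduce_cat Hu Hv. Qed.

Lemma feq_trans n (u v w : word n) : feq u v -> feq v w -> feq u w.
Proof. exact: etrans. Qed.
Lemma feq_sym n (u v : word n) : feq u v -> feq v u.
Proof. exact: esym. Qed.
Lemma feq_refl n (u : word n) : feq u u.
Proof. by []. Qed.

Lemma winv_cat n (u v : word n) : winv (u ++ v) = winv v ++ winv u.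
Proof. by rewrite /winv map_cat rev_cat. Qed.
Lemma winvK n (u : word n) : winv (winv u) = u.
Proof. by rewrite /winv map_rev revK -map_comp (eq_map (@linvK n)) map_id. Qed.
Lemma winv_cons n x (u : word n) : winv (x :: u) = winv u ++ [:: linv x].
Proof. by rewrite /winv /= rev_cons -cats1. Qed.
Lemma winv_nil n : winv (@nil (letter n)) = [::].
Proof. by []. Qed.

Lemma feq_invr n (u : word n) : feq (u ++ winv u) [::].
Proof.
elim: u => [|x u IH] //. rewrite winv_cons.
have -> : (x :: u) ++ (winv u ++ [:: linv x]) = [:: x] ++ (u ++ winv u) ++ [:: linv x].
  by rewrite catA.
rewrite /feq (feq_cat (feq_refl [:: x]) (feq_cat IH (feq_refl [:: linv x]))).
by rewrite /= eqxx.
Qed.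

Lemma feq_invl n (u : word n) : feq (winv u ++ u) [::].
Proof. have := feq_invr (winv u); by rewrite winvK. Qed.

Lemma freduce_inv T n (f : word n -> T) (g : letter n -> T -> T) :
  (forall x r, f (x :: r) = g x (f r)) -> (forall x a, g x (g (linv x) a) = a) ->
  forall u, f (freduce u) = f u.
Proof.
move=> Hf Hg. have Hc : forall x s, f (cred x s) = g x (f s).
  move=> x [|y s] /=; first by rewrite Hf.
  case: eqP => [->|_]; by rewrite ?Hf ?Hg.
elim => [|x u IH] //. rewrite (_ : freduce (x::u) = cred x (freduce u)); last by rewrite /=; case: (freduce u).
by rewrite Hc IH Hf.
Qed.

Lemma feq_f T n (f : word n -> T) (g : letter n -> T -> T) :
  (forall x r, f (x :: r) = g x (f r)) -> (forall x a, g x (g (linv x) a) = a) ->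
  forall u v, feq u v -> f u = f v.
Proof.
move=> Hf Hg u v E. by rewrite -(freduce_inv Hf Hg u) E (freduce_inv Hf Hg).
Qed.

Lemma expsum_cons n x (r : word n) : expsum (x :: r) = lsign x + expsum r.
Proof. by rewrite /expsum big_cons. Qed.
Lemma expsum_nil n : expsum (@nil (letter n)) = 0.
Proof. by rewrite /expsum big_nil. Qed.
Lemma expsum_cat n (u v : word n) : expsum (u ++ v) = expsum u + expsum v.
Proof. by rewrite /expsum big_cat. Qed.
Lemma lsign_linv n (x : letter n) : lsign (linv x) = - lsign x.
Proof. by case: x => i [] /=; rewrite /lsign /= ?opprK. Qed.
Lemma expsum_winv n (u : word n) : expsum (winv u) = - expsum u.
Proof.
elim: u => [|x u IH]; first by rewrite expsum_nil oppr0.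
by rewrite winv_cons expsum_cat IH expsum_cons expsum_cons expsum_nil lsign_linv addr0 opprD addrC.
Qed.
Lemma feq_expsum n (u v : word n) : feq u v -> expsum u = expsum v.
Proof.
apply: (feq_f (g := fun x a => lsign x + a)) => [x r|x a]; first exact: expsum_cons.
by rewrite lsign_linv addrA addrN add0r.
Qed.

Lemma tvar_neq0 : tvar != 0.
Proof. by rewrite /tvar /polyQ tofrac_eq0 polyX_eq0. Qed.

Lemma tvar_neq1 : tvar != 1.
Proof.
rewrite /tvar /polyQ -tofrac1 tofrac_eq; apply/eqP => E.
by have := congr1 (fun p : {poly int} => size p) E; rewrite /= size_polyX size_poly1.
Qed.

Lemma phiL1 n (x : letter n) : phiL [:: x] = tvar ^ lsign x.
Proof. by rewrite /phiL expsum_cons expsum_nil addr0. Qed.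
Lemma phiL_cat n (u v : word n) : phiL (u ++ v) = phiL u * phiL v.
Proof. by rewrite /phiL expsum_cat expfzDr // tvar_neq0. Qed.
Lemma phiL_nil n : phiL (@nil (letter n)) = 1.
Proof. by rewrite /phiL expsum_nil. Qed.
Lemma phiL_neq0 n (u : word n) : phiL u != 0.
Proof. exact: expfz_neq0 tvar_neq0. Qed.
Lemma phiL_winv n (u : word n) : phiL (winv u) = (phiL u)^-1.
Proof. by rewrite /phiL expsum_winv invr_expz. Qed.
Lemma phiL_feq n (u v : word n) : feq u v -> phiL u = phiL v.
Proof. by rewrite /phiL => /feq_expsum ->. Qed.

Definition delta n (i : 'I_n) (x : letter n) : Qt :=
  if x.1 == i then (if x.2 then - tvar ^ (-1 : int) else 1) else 0.

Lemma foxphi_cons n i x (r : word n) :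
  foxphi i (x :: r) = delta i x + tvar ^ lsign x * foxphi i r.
Proof. by rewrite /= phiL1. Qed.
Lemma foxphi_nil n i : foxphi i (@nil (letter n)) = 0.
Proof. by []. Qed.

Lemma foxphi_cat n i (u v : word n) :
  foxphi i (u ++ v) = foxphi i u + phiL u * foxphi i v.
Proof.
elim: u => [|x u IH]; first by rewrite phiL_nil mul1r add0r.
rewrite cat_cons !foxphi_cons IH (phiL_cat [:: x] u) phiL1. ring.
Qed.

Lemma feq_fox n i (u v : word n) : feq u v -> foxphi i u = foxphi i v.
Proof.
apply: (feq_f (g := fun x a => delta i x + tvar ^ lsign x * a)) => [x r|x a].
  exact: foxphi_cons.
rewrite lsign_linv /delta /=. have t0 := tvar_neq0.
case: x => j [] /=; case: (j == i); rewrite /lsign /=.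
all: rewrite ?opprK ?exprN1 ?expr1z ?add0r ?mulrDr ?mulr1 ?mulr0 ?add0r ?addrA ?mulrN
  ?mulfV ?addrN ?addNr ?add0r ?mulrA ?mulfV ?mulVf // ?mul1r //.
Qed.

Add Parametric Relation n : (word n) (@feq n)
  reflexivity proved by (@feq_refl n)
  symmetry proved by (@feq_sym n)
  transitivity proved by (@feq_trans n) as feq_rel.

Add Parametric Morphism n : (@cat (letter n)) with
  signature (@feq n) ==> (@feq n) ==> (@feq n) as cat_mor.
Proof. move=> *; exact: feq_cat. Qed.

Lemma feq_c1 n (u x : word n) : feq ((u ++ winv x) ++ x) u.
Proof. rewrite -catA. setoid_rewrite feq_invl. by rewrite cats0. Qed.
Lemma feq_c2 n (u x : word n) : feq ((u ++ x) ++ winv x) u.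
Proof. rewrite -catA. setoid_rewrite feq_invr. by rewrite cats0. Qed.

Lemma feq_winv n (u v : word n) : feq u v -> feq (winv u) (winv v).
Proof.
move=> E. apply: (@feq_trans _ _ (winv u ++ (u ++ winv v))).
  rewrite -{1}[winv u]cats0; apply: feq_cat => //.
  apply: feq_trans (feq_sym (feq_invr v)) _; exact: feq_cat.
rewrite catA; apply: (@feq_trans _ _ ([::] ++ winv v)) => //.
exact: feq_cat (feq_invl u) (feq_refl _).
Qed.

Add Parametric Morphism n : (@winv n) with
  signature (@feq n) ==> (@feq n) as winv_mor.
Proof. exact: feq_winv. Qed.

Lemma conj_comm n (x a b : word n) :
  feq (x ++ wcomm a b ++ winv x) (wcomm (x ++ a ++ winv x) (x ++ b ++ winv x)).
Proof.
rewrite /wcomm !winv_cat !winvK !catA.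
repeat setoid_rewrite feq_c1. reflexivity.
Qed.

Definition sel n (p : word n * bool) : word n := if p.2 then winv p.1 else p.1.

Lemma in_gen_feq n (S : word n -> Prop) u v : in_gen S u -> feq u v -> in_gen S v.
Proof. case=> l [Hl E] F; exists l; split => //; exact: feq_trans (feq_sym F) E. Qed.

Lemma in_gen_nil n (S : word n -> Prop) : in_gen S [::].
Proof. by exists [::]. Qed.

Lemma in_gen_gen n (S : word n -> Prop) g : S g -> in_gen S g.
Proof.
move=> Hg; exists [:: (g, false)]; split; last by rewrite /= cats0.
by move=> p; rewrite inE => /eqP ->.
Qed.

Lemma in_gen_cat n (S : word n -> Prop) u v : in_gen S u -> in_gen S v -> in_gen S (u ++ v).
Proof.
case=> l1 [H1 E1] [l2 [H2 E2]]; exists (l1 ++ l2); split.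
  by move=> p; rewrite mem_cat => /orP[]; [apply: H1|apply: H2].
by rewrite map_cat flatten_cat; apply: feq_cat.
Qed.

Lemma in_gen_winv n (S : word n -> Prop) u : in_gen S u -> in_gen S (winv u).
Proof.
case=> l [Hl E]; apply: (in_gen_feq _ (feq_sym (feq_winv E))).
elim: l Hl {E} => [|p l IH] Hl /=; first exact: in_gen_nil.
rewrite winv_cat; apply: in_gen_cat.
  by apply: IH => q Hq; apply: Hl; rewrite inE Hq orbT.
have Hp : S p.1 by apply: Hl; rewrite inE eqxx.
case: p Hp {Hl} => g [] /= Hg; first by rewrite winvK; exact: in_gen_gen.
exists [:: (g, true)]; split; last by rewrite /= cats0.
by move=> q; rewrite inE => /eqP ->.
Qed.

Lemma in_gen_mono n (S T : word n -> Prop) u :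
  (forall g, S g -> in_gen T g) -> in_gen S u -> in_gen T u.
Proof.
move=> ST [l [Hl E]]; apply: (in_gen_feq _ (feq_sym E)).
elim: l Hl {E} => [|p l IH] Hl /=; first exact: in_gen_nil.
apply: in_gen_cat; last by apply: IH => q Hq; apply: Hl; rewrite inE Hq orbT.
have Hp : S p.1 by apply: Hl; rewrite inE eqxx.
case: p Hp {Hl} => g [] /= Hg; last exact: ST.
exact: in_gen_winv (ST _ Hg).
Qed.

Lemma in_gen_conj n (S : word n -> Prop) x u :
  (forall g, S g -> exists2 g', S g' & feq (x ++ g ++ winv x) g') ->
  in_gen S u -> in_gen S (x ++ u ++ winv x).
Proof.
move=> HS [l [Hl E]].
apply: (in_gen_feq (u := x ++ flatten [seq sel i | i <- l] ++ winv x)); last first.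
  by apply: feq_cat => //; apply: feq_cat => //; apply: feq_sym.
elim: l Hl {E} => [|p l IH] Hl /=.
  apply: (in_gen_feq (in_gen_nil S)); apply: feq_sym; exact: feq_invr.
apply: (in_gen_feq (u := (x ++ sel p ++ winv x) ++ (x ++ flatten [seq sel i | i <- l] ++ winv x))); last first.
  rewrite -!catA. apply: feq_cat => //. apply: feq_cat => //.
  by rewrite catA; apply: feq_trans (feq_cat (feq_invl x) (feq_refl _)) _.
apply: in_gen_cat; last by apply: IH => q Hq; apply: Hl; rewrite inE Hq orbT.
have Hp : S p.1 by apply: Hl; rewrite inE eqxx.
case: p Hp {Hl} => g [] /= Hg; case: (HS g Hg) => g' Sg' Eg.
  have -> : x ++ winv g ++ winv x = winv (x ++ g ++ winv x) by rewrite !winv_cat winvK -catA.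
  apply: in_gen_winv. exact: in_gen_feq (in_gen_gen Sg') (feq_sym Eg).
exact: in_gen_feq (in_gen_gen Sg') (feq_sym Eg).
Qed.

Lemma kerphi_conj n (x a : word n) : kerphi a -> kerphi (x ++ a ++ winv x).
Proof. rewrite /kerphi !expsum_cat expsum_winv => ->. by rewrite add0r addrN. Qed.

Lemma commK_conj n (x u : word n) : commK u -> commK (x ++ u ++ winv x).
Proof.
apply: in_gen_conj => g [a [b [Ha [Hb ->]]]].
exists (wcomm (x ++ a ++ winv x) (x ++ b ++ winv x)); last exact: conj_comm.
by exists (x ++ a ++ winv x), (x ++ b ++ winv x); split; [|split]; try apply: kerphi_conj.
Qed.

Lemma commF_conj n (x u : word n) : commF u -> commF (x ++ u ++ winv x).
Proof.
apply: in_gen_conj => g [a [b ->]].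
exists (wcomm (x ++ a ++ winv x) (x ++ b ++ winv x)); last exact: conj_comm.
by exists (x ++ a ++ winv x), (x ++ b ++ winv x).
Qed.

Definition ceq n (w v : word n) := commK (w ++ winv v).

Lemma ceq_feq n (w v : word n) : feq w v -> ceq w v.
Proof.
move=> E; apply: (in_gen_feq (in_gen_nil _)); apply: feq_sym.
apply: feq_trans (feq_cat E (feq_refl _)) _; exact: feq_invr.
Qed.
Lemma ceq_refl n (w : word n) : ceq w w.
Proof. exact: ceq_feq. Qed.
Lemma ceq_sym n (w v : word n) : ceq w v -> ceq v w.
Proof. move=> /in_gen_winv; by rewrite /ceq winv_cat winvK. Qed.
Lemma ceq_trans n (w v u : word n) : ceq w v -> ceq v u -> ceq w u.
Proof.
move=> H1 H2; apply: in_gen_feq (in_gen_cat H1 H2) _.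
rewrite -!catA; apply: feq_cat => //; rewrite catA.
exact: feq_trans (feq_cat (feq_invl v) (feq_refl _)) _.
Qed.
Lemma ceq_catl n (x w v : word n) : ceq w v -> ceq (x ++ w) (x ++ v).
Proof. move=> /(commK_conj x); by rewrite /ceq winv_cat !catA. Qed.
Lemma ceq_catr n (x w v : word n) : ceq w v -> ceq (w ++ x) (v ++ x).
Proof.
move=> H; apply: in_gen_feq H _; rewrite winv_cat catA.
apply: feq_cat => //; apply: feq_sym; exact: feq_c2.
Qed.
Lemma ceq_cat n (w w' v v' : word n) : ceq w w' -> ceq v v' -> ceq (w ++ v) (w' ++ v').
Proof. move=> H1 H2; apply: ceq_trans (ceq_catr _ H1) (ceq_catl _ H2). Qed.
Lemma ceq_comm n (a b : word n) : kerphi a -> kerphi b -> ceq (a ++ b) (b ++ a).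
Proof.
move=> Ha Hb; apply: in_gen_gen; exists a, b; split; [|split] => //.
by rewrite winv_cat /wcomm -!catA.
Qed.
Lemma ceq_nil n (w : word n) : ceq w [::] -> commK w.
Proof. by rewrite /ceq winv_nil cats0. Qed.

Add Parametric Relation n : (word n) (@ceq n)
  reflexivity proved by (@ceq_refl n)
  symmetry proved by (@ceq_sym n)
  transitivity proved by (@ceq_trans n) as ceq_rel.

Add Parametric Morphism n : (@cat (letter n)) with
  signature (@ceq n) ==> (@ceq n) ==> (@ceq n) as cat_cmor.
Proof. move=> *; exact: ceq_cat. Qed.

Lemma gf_inv (F : fieldType) (P f X : F) : P != 0 -> f + P * X = 0 -> X = - P^-1 * f.
Proof. move=> HP E. have -> : f = - (P * X) by rewrite -(subr0 f) -E; ring. field. done. Qed.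

Lemma gf_sum1 (F : fieldType) (t P S : F) : S * (t - 1) = P - 1 -> (1 + t * S) * (t - 1) = t * P - 1.
Proof. move=> E. have -> : (1 + t * S) * (t - 1) = (t - 1) + t * (S * (t - 1)) by ring. rewrite E; ring. Qed.

Lemma gf_sum2 (F : fieldType) (t P S : F) : t != 0 -> S * (t - 1) = P - 1 ->
  (- t^-1 + t^-1 * S) * (t - 1) = t^-1 * P - 1.
Proof.
move=> H E. have -> : (- t^-1 + t^-1 * S) * (t - 1) = - t^-1 * (t - 1) + t^-1 * (S * (t - 1)) by ring.
rewrite E; field. done.
Qed.

Lemma gf_comm (F : fieldType) (A B fa fb : F) : A != 0 -> B != 0 ->
  fa + A * (fb + B * (- A^-1 * fa + A^-1 * (- B^-1 * fb))) = (1 - B) * fa + (A - 1) * fb.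
Proof. move=> HA HB; field. by rewrite HA HB. Qed.

Lemma fox_winv n i (u : word n) : foxphi i (winv u) = - (phiL u)^-1 * foxphi i u.
Proof.
apply: gf_inv; first exact: phiL_neq0.
by rewrite -foxphi_cat (feq_fox i (feq_invr u)).
Qed.

Lemma phiL0 n (u : word n) : expsum u = 0 -> phiL u = 1.
Proof. by rewrite /phiL => ->. Qed.

Lemma sum_delta n (x : letter n) : \sum_(i < n) delta i x = if x.2 then - tvar ^ (-1 : int) else 1.
Proof.
rewrite (bigD1 x.1) //= big1 ?addr0; first by rewrite /delta eqxx.
by move=> i Hi; rewrite /delta eq_sym (negbTE Hi).
Qed.

Lemma sum_fox n (w : word n) : (\sum_(i < n) foxphi i w) * (tvar - 1) = phiL w - 1.
Proof.
elim: w => [|x w IH]; first by rewrite big1 ?mul0r ?phiL_nil ?subrr.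
rewrite (eq_bigr _ (fun i _ => foxphi_cons i x w)) big_split /= -mulr_sumr sum_delta.
rewrite (phiL_cat [:: x] w) phiL1.
case: x => j [] /=; rewrite /lsign /=.
  by rewrite exprN1 (gf_sum2 tvar_neq0 IH).
by rewrite expr1z (gf_sum1 IH).
Qed.

Lemma fox_comm n i (a b : word n) :
  foxphi i (wcomm a b) = (1 - phiL b) * foxphi i a + (phiL a - 1) * foxphi i b.
Proof.
rewrite /wcomm !foxphi_cat !fox_winv phiL_winv.
exact: (gf_comm _ _ (phiL_neq0 a) (phiL_neq0 b)).
Qed.

Lemma gf_add (F : fieldType) (T P Q : F) k m : T != 0 ->
  (P * T ^+ m + Q * T ^+ k) * (T ^+ (k + m))^-1 = P * (T ^+ k)^-1 + Q * (T ^+ m)^-1.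
Proof.
move=> H; rewrite exprD. have Hk : T ^+ k != 0 by exact: expf_neq0.
have Hm : T ^+ m != 0 by exact: expf_neq0. field. by rewrite Hk Hm.
Qed.

Lemma gf_mul (F : fieldType) (T P Q : F) k m : T != 0 ->
  (P * Q) * (T ^+ (k + m))^-1 = (P * (T ^+ k)^-1) * (Q * (T ^+ m)^-1).
Proof.
move=> H; rewrite exprD. have Hk : T ^+ k != 0 by exact: expf_neq0.
have Hm : T ^+ m != 0 by exact: expf_neq0. field. by rewrite Hk Hm.
Qed.

Lemma polyQM p q : polyQ (p * q) = polyQ p * polyQ q.
Proof. exact: tofracM. Qed.
Lemma polyQD p q : polyQ (p + q) = polyQ p + polyQ q.
Proof. exact: tofracD. Qed.
Lemma polyQN p : polyQ (- p) = - polyQ p.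
Proof. exact: tofracN. Qed.
Lemma polyQ1 : polyQ 1 = 1.
Proof. exact: tofrac1. Qed.
Lemma polyQ0 : polyQ 0 = 0.
Proof. exact: tofrac0. Qed.
Lemma polyQXn k : polyQ ('X ^+ k) = tvar ^+ k.
Proof. exact: tofracXn. Qed.

Lemma laurentD f g : laurent f -> laurent g -> laurent (f + g).
Proof.
case=> p [k ->] [q [m ->]]; exists (p * 'X^m + q * 'X^k), (k + m)%N.
by rewrite polyQD !polyQM !polyQXn gf_add // tvar_neq0.
Qed.
Lemma laurentM f g : laurent f -> laurent g -> laurent (f * g).
Proof.
case=> p [k ->] [q [m ->]]; exists (p * q), (k + m)%N.
by rewrite polyQM gf_mul // tvar_neq0.
Qed.
Lemma laurentN f : laurent f -> laurent (- f).
Proof. case=> p [k ->]; exists (- p), k; by rewrite polyQN mulNr. Qed.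
Lemma laurent_poly p : laurent (polyQ p).
Proof. by exists p, 0%N; rewrite expr0 invr1 mulr1. Qed.
Lemma laurent0 : laurent 0.
Proof. by rewrite -polyQ0; apply: laurent_poly. Qed.
Lemma laurent1 : laurent 1.
Proof. by rewrite -polyQ1; apply: laurent_poly. Qed.
Lemma laurentB f g : laurent f -> laurent g -> laurent (f - g).
Proof. by move=> Hf Hg; apply: laurentD => //; apply: laurentN. Qed.
Lemma laurent_tz (z : int) : laurent (tvar ^ z).
Proof.
case: z => k.
  by change (laurent (tvar ^+ k)); rewrite -polyQXn; apply: laurent_poly.
by exists 1, k.+1; rewrite polyQ1 mul1r.
Qed.
Lemma laurent_int (z : int) : laurent (z%:~R).
Proof.
have -> : (z%:~R : Qt) = polyQ (z%:~R) by rewrite /polyQ rmorph_int.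
exact: laurent_poly.
Qed.
Lemma laurent_sum I (r : seq I) (P : pred I) (F : I -> Qt) :
  (forall i, P i -> laurent (F i)) -> laurent (\sum_(i <- r | P i) F i).
Proof.
move=> H; elim/big_rec: _ => [|i x Pi Hx]; first exact: laurent0.
exact: laurentD (H i Pi) Hx.
Qed.

Lemma laurent_phiL n (w : word n) : laurent (phiL w).
Proof. exact: laurent_tz. Qed.

Lemma laurent_foxphi n i (w : word n) : laurent (foxphi i w).
Proof.
elim: w => [|x w IH]; first exact: laurent0.
rewrite foxphi_cons; apply: laurentD; last exact: laurentM (laurent_tz _) IH.
rewrite /delta; case: (x.1 == i); last exact: laurent0.
case: x.2; [exact: laurentN (laurent_tz _)|exact: laurent1].
Qed.

Lemma gf_geo (F : fieldType) (X t : F) : X != 0 -> 1 - t != 0 ->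
  (1 - X^-1) / (1 - t) = - X^-1 * ((1 - X) / (1 - t)).
Proof. move=> HX H1. field. by rewrite HX H1. Qed.

Lemma laurent_geo (z : int) : laurent ((1 - tvar ^ z) / (1 - tvar)).
Proof.
have H1 : 1 - tvar != 0 by rewrite subr_eq0 eq_sym tvar_neq1.
have Hn : forall k : nat, (1 - tvar ^+ k) / (1 - tvar) = \sum_(i < k) tvar ^+ i.
  move=> k; apply: (mulIf H1); rewrite mulfVK //.
  have := subrXX 1 tvar k. rewrite expr1n => ->. rewrite mulrC; congr (_ * _).
  by apply: eq_bigr => i _; rewrite expr1n mul1r.
case: z => k.
  rewrite Hn; apply: laurent_sum => i _; exact: laurent_tz (Posz i).
have -> : (1 - tvar ^ Negz k) / (1 - tvar) = - tvar ^ Negz k * ((1 - tvar ^+ k.+1) / (1 - tvar)).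
  change (tvar ^ Negz k) with ((tvar ^+ k.+1)^-1).
  have Ht : tvar ^+ k.+1 != 0 by apply: expf_neq0; exact: tvar_neq0.
  exact: gf_geo.
apply: laurentM; first exact: laurentN (laurent_tz _).
rewrite Hn; apply: laurent_sum => i _; exact: laurent_tz (Posz i).
Qed.

Lemma foxvec_feq n (u v : word n) : feq u v -> foxvec u = foxvec v.
Proof. by move=> E; apply/rowP => i; rewrite !mxE (feq_fox i E). Qed.
Lemma foxvec_cat n (u v : word n) : foxvec (u ++ v) = foxvec u + phiL u *: foxvec v.
Proof. by apply/rowP => i; rewrite !mxE foxphi_cat. Qed.
Lemma foxvec_winv n (u : word n) : foxvec (winv u) = (- (phiL u)^-1) *: foxvec u.
Proof. by apply/rowP => i; rewrite !mxE fox_winv. Qed.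
Lemma foxvec_nil n : foxvec (@nil (letter n)) = 0.
Proof. by apply/rowP => i; rewrite !mxE. Qed.

Lemma in_gen_fox n (S : word n -> Prop) (P : 'rV[Qt]_n -> Prop) :
  P 0 -> (forall x y, P x -> P y -> P (x + y)) -> (forall x, P x -> P (- x)) ->
  (forall g, S g -> expsum g = 0 /\ P (foxvec g)) ->
  forall w, in_gen S w -> expsum w = 0 /\ P (foxvec w).
Proof.
move=> P0 PD PN HS w [l [Hl E]]; rewrite (feq_expsum E) (foxvec_feq E).
elim: l Hl {E} => [|p l IH] Hl /=; first by rewrite expsum_nil foxvec_nil.
have [IH1 IH2] : expsum (flatten [seq sel i | i <- l]) = 0 /\ P (foxvec (flatten [seq sel i | i <- l])).
  by apply: IH => q Hq; apply: Hl; rewrite inE Hq orbT.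
have Hp : S p.1 by apply: Hl; rewrite inE eqxx.
have [H1 H2] := HS _ Hp.
have [E1 E2] : expsum (sel p) = 0 /\ P (foxvec (sel p)).
  rewrite /sel; case: p.2; last by [].
  rewrite expsum_winv H1 oppr0 foxvec_winv phiL0 // invr1 scaleN1r; split => //; exact: PN.
rewrite expsum_cat foxvec_cat E1 IH1 phiL0 // scale1r; split; [by rewrite addr0|exact: PD].
Qed.

Definition Sdiff n (x : 'rV[Qt]_n) : Prop :=
  exists y : 'rV[Qt]_n, laurent_vec y /\ \sum_(i < n) y 0 i = 0 /\ x = (1 - tvar) *: y.
Definition Sspan n nu (R : 'I_nu -> word n) (x : 'rV[Qt]_n) : Prop :=
  exists c : 'I_nu -> Qt, (forall j, laurent (c j)) /\ x = \sum_(j < nu) c j *: foxvec (R j).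

Lemma Sdiff0 n : Sdiff (0 : 'rV[Qt]_n).
Proof.
exists 0; split; [|split]; last by rewrite scaler0.
  by move=> i; rewrite mxE; exact: laurent0.
by rewrite big1 // => i _; rewrite mxE.
Qed.
Lemma SdiffD n (x y : 'rV[Qt]_n) : Sdiff x -> Sdiff y -> Sdiff (x + y).
Proof.
case=> a [La [Sa ->]] [b [Lb [Sb ->]]]; exists (a + b); split; [|split].
- by move=> i; rewrite mxE; apply: laurentD.
- by rewrite (eq_bigr _ (fun i _ => mxE _ _ _ _)) big_split /= Sa Sb addr0.
- by rewrite scalerDr.
Qed.
Lemma SdiffZ n c (x : 'rV[Qt]_n) : laurent c -> Sdiff x -> Sdiff (c *: x).
Proof.
move=> Lc [a [La [Sa ->]]]; exists (c *: a); split; [|split].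
- by move=> i; rewrite mxE; apply: laurentM.
- by rewrite (eq_bigr _ (fun i _ => mxE _ _ _ _)) -mulr_sumr Sa mulr0.
- by rewrite !scalerA mulrC.
Qed.
Lemma SdiffN n (x : 'rV[Qt]_n) : Sdiff x -> Sdiff (- x).
Proof. move=> H; rewrite -scaleN1r; apply: SdiffZ H; exact: laurentN laurent1. Qed.

Lemma Sspan0 n nu (R : 'I_nu -> word n) : Sspan R 0.
Proof.
exists (fun _ => 0); split => [j|]; first exact: laurent0.
by rewrite big1 // => j _; rewrite scale0r.
Qed.
Lemma SspanD n nu (R : 'I_nu -> word n) x y : Sspan R x -> Sspan R y -> Sspan R (x + y).
Proof.
case=> a [La ->] [b [Lb ->]]; exists (fun j => a j + b j); split => [j|].
  exact: laurentD.
by rewrite -big_split /=; apply: eq_bigr => j _; rewrite scalerDl.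
Qed.
Lemma SspanZ n nu (R : 'I_nu -> word n) c x : laurent c -> Sspan R x -> Sspan R (c *: x).
Proof.
move=> Lc [a [La ->]]; exists (fun j => c * a j); split => [j|]; first exact: laurentM.
by rewrite scaler_sumr; apply: eq_bigr => j _; rewrite scalerA.
Qed.
Lemma SspanN n nu (R : 'I_nu -> word n) x : Sspan R x -> Sspan R (- x).
Proof. move=> H; rewrite -scaleN1r; apply: SspanZ H; exact: laurentN laurent1. Qed.
Lemma Sspan_gen n nu (R : 'I_nu -> word n) j : Sspan R (foxvec (R j)).
Proof.
exists (fun j' => if j' == j then 1 else 0); split => [j'|].
  by case: (j' == j); [exact: laurent1|exact: laurent0].
rewrite (bigD1 j) //= eqxx scale1r big1 ?addr0 // => j' /negbTE ->; exact: scale0r.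
Qed.

Lemma gf_comm2 (F : fieldType) (t A B Sa Sb : F) : t != 1 -> Sa * (t - 1) = A - 1 ->
  Sb * (t - 1) = B - 1 -> (1 - B) / (1 - t) * Sa - (1 - A) / (1 - t) * Sb = 0.
Proof.
move=> Ht Ea Eb. have H1 : t - 1 != 0 by rewrite subr_eq0.
have H2 : 1 - t != 0 by rewrite subr_eq0 eq_sym.
have -> : Sa = (A - 1) / (t - 1) by rewrite -Ea mulfK.
have -> : Sb = (B - 1) / (t - 1) by rewrite -Eb mulfK.
field. by rewrite H1 H2.
Qed.

Lemma gf_comm3 (F : fieldType) (t A B fa fb : F) : t != 1 ->
  (1 - B) * fa + (A - 1) * fb = (1 - t) * ((1 - B) / (1 - t) * fa - (1 - A) / (1 - t) * fb).
Proof. move=> Ht. have H2 : 1 - t != 0 by rewrite subr_eq0 eq_sym. field. done. Qed.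

Lemma expsum_comm n (a b : word n) : expsum (wcomm a b) = 0.
Proof.
rewrite /wcomm !expsum_cat !expsum_winv.
ring.
Qed.

Lemma comm_Sdiff n (a b : word n) : Sdiff (foxvec (wcomm a b)).
Proof.
set A := phiL a; set B := phiL b.
exists (\row_i ((1 - B) / (1 - tvar) * foxphi i a - (1 - A) / (1 - tvar) * foxphi i b)).
split; [|split].
- move=> i; rewrite mxE; apply: laurentB; apply: laurentM; try exact: laurent_foxphi.
    exact: laurent_geo. exact: laurent_geo.
- rewrite (eq_bigr _ (fun i _ => mxE _ _ _ _)) sumrB -!mulr_sumr.
  apply: gf_comm2 tvar_neq1 _ _; exact: sum_fox.
- apply/rowP => i; rewrite !mxE fox_comm; exact: gf_comm3 tvar_neq1.
Qed.

Lemma commF_fox n (w : word n) : commF w -> expsum w = 0 /\ Sdiff (foxvec w).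
Proof.
apply: in_gen_fox; [exact: Sdiff0|exact: SdiffD|exact: SdiffN|].
move=> g [a [b ->]]; split; [exact: expsum_comm|exact: comm_Sdiff].
Qed.

Lemma commK_fox n (w : word n) : commK w -> expsum w = 0 /\ foxvec w = 0.
Proof.
apply: (in_gen_fox (P := fun x => x = 0)) => //.
- by move=> x y -> ->; rewrite addr0.
- by move=> x ->; rewrite oppr0.
move=> g [a [b [Ha [Hb ->]]]]; split; first exact: expsum_comm.
apply/rowP => i; rewrite !mxE fox_comm !phiL0 //.
by rewrite subrr !mul0r addr0.
Qed.

Lemma nclosure_fox n nu (R : 'I_nu -> word n) (w : word n) :
  (forall j, expsum (R j) = 0) -> nclosure R w -> expsum w = 0 /\ Sspan R (foxvec w).
Proof.
move=> HR; apply: in_gen_fox; [exact: Sspan0|exact: SspanD|exact: SspanN|].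
move=> g [u [j ->]]; split.
  by rewrite !expsum_cat expsum_winv HR add0r addrN.
rewrite !foxvec_cat foxvec_winv (phiL0 (HR j)) scale1r scalerDr scalerA mulrN mulfV ?phiL_neq0 //.
rewrite scaleN1r addrCA addrN addr0.
apply: SspanZ; [exact: laurent_phiL|exact: Sspan_gen].
Qed.

Definition pw n (i0 : 'I_n) (z : int) : word n :=
  match z with Posz k => nseq k (i0, false) | Negz k => nseq k.+1 (i0, true) end.

Lemma expsum_nseq n (x : letter n) k : expsum (nseq k x) = lsign x *+ k.
Proof.
elim: k => [|k IH]; first by rewrite expsum_nil.
by rewrite /= expsum_cons IH mulrS.
Qed.

Lemma expsum_pw n (i0 : 'I_n) z : expsum (pw i0 z) = z.
Proof.
case: z => k; rewrite /pw expsum_nseq /lsign /=; first by rewrite -[1 *+ k]/(k%:R) natz.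
by rewrite mulNrn NegzE -[1 *+ k.+1]/(k.+1%:R) natz.
Qed.

Lemma foxvec_conj n (u h : word n) : expsum h = 0 ->
  foxvec (u ++ h ++ winv u) = phiL u *: foxvec h.
Proof.
move=> Hh; rewrite !foxvec_cat foxvec_winv (phiL0 Hh) scale1r scalerDr scalerA mulrN mulfV ?phiL_neq0 //.
by rewrite scaleN1r addrCA addrN addr0.
Qed.

Lemma expsum_conj n (u h : word n) : expsum h = 0 -> expsum (u ++ h ++ winv u) = 0.
Proof. by move=> Hh; rewrite !expsum_cat expsum_winv Hh add0r addrN. Qed.

Definition ipow n (g : word n) (a : int) : word n :=
  match a with Posz k => flatten (nseq k g) | Negz k => flatten (nseq k.+1 (winv g)) end.

Lemma nseq_fox n (g : word n) k : expsum g = 0 ->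
  expsum (flatten (nseq k g)) = 0 /\ foxvec (flatten (nseq k g)) = foxvec g *+ k.
Proof.
move=> Hg; elim: k => [|k [IH1 IH2]]; first by rewrite /= expsum_nil foxvec_nil.
by rewrite /= expsum_cat foxvec_cat IH1 Hg phiL0 // scale1r IH2 mulrS addr0.
Qed.

Lemma ipow_fox n (g : word n) a : expsum g = 0 ->
  expsum (ipow g a) = 0 /\ foxvec (ipow g a) = a%:~R *: foxvec g.
Proof.
move=> Hg; rewrite scaler_int; case: a => k /=; first exact: nseq_fox.
have Hg' : expsum (winv g) = 0 by rewrite expsum_winv Hg oppr0.
have [H1 H2] := nseq_fox k.+1 Hg'; split => //.
by rewrite H2 foxvec_winv phiL0 // invr1 scaleN1r mulNrn.
Qed.

Lemma in_gen_pow n (S : word n -> Prop) g a : in_gen S g -> in_gen S (ipow g a).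
Proof.
have H : forall k h, in_gen S h -> in_gen S (flatten (nseq k h)).
  move=> k h Hh; elim: k => [|k IH] /=; first exact: in_gen_nil.
  exact: in_gen_cat.
move=> Hg; case: a => k; apply: H => //; exact: in_gen_winv.
Qed.

Lemma polyQ_C (a : int) : polyQ (a%:P) = a%:~R.
Proof.
rewrite -[a in a%:P]intz rmorph_int /polyQ rmorph_int //.
Qed.

Lemma phiL_pw n (i0 : 'I_n) z : phiL (pw i0 z) = tvar ^ z.
Proof. by rewrite /phiL expsum_pw. Qed.

Lemma realize n (i0 : 'I_n) (P : word n -> Prop) g :
  P [::] -> (forall u v, P u -> P v -> P (u ++ v)) ->
  (forall u a, P u -> P (ipow u a)) ->
  (forall x u, P u -> P (x ++ u ++ winv x)) ->
  P g -> expsum g = 0 ->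
  forall c, laurent c -> exists h, [/\ P h, expsum h = 0 & foxvec h = c *: foxvec g].
Proof.
move=> P0 PC Ppow Pconj Pg Hg.
have claim : forall p (z : int), exists h, [/\ P h, expsum h = 0 &
    foxvec h = (polyQ p * tvar ^ z) *: foxvec g].
  elim/poly_ind => [|p a IH] z.
    by exists [::]; rewrite expsum_nil foxvec_nil polyQ0 mul0r scale0r.
  have [h1 [P1 E1 F1]] := IH (z + 1).
  set h2 := pw i0 z ++ ipow g a ++ winv (pw i0 z).
  have [Ea Fa] := ipow_fox a Hg.
  exists (h1 ++ h2); split.
  - apply: PC => //; apply: Pconj; exact: Ppow.
  - by rewrite expsum_cat E1 expsum_conj.
  rewrite foxvec_cat (phiL0 E1) scale1r F1 foxvec_conj // Fa phiL_pw !scalerA -scalerDl.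
  congr (_ *: _). rewrite polyQD polyQM polyQ_C expfzDr ?tvar_neq0 // expr1z.
  rewrite /tvar; ring.
move=> c [p [k ->]]; rewrite exprnN; exact: claim.
Qed.

Lemma realize_sum n I (r : seq I) (F : I -> 'rV[Qt]_n) (P : word n -> Prop) :
  P [::] -> (forall u v, P u -> P v -> P (u ++ v)) ->
  (forall i, exists h, [/\ P h, expsum h = 0 & foxvec h = F i]) ->
  exists h, [/\ P h, expsum h = 0 & foxvec h = \sum_(i <- r) F i].
Proof.
move=> P0 PC HF; elim/big_rec: _ => [|i x _ [h [Ph Eh Fh]]].
  by exists [::]; rewrite expsum_nil foxvec_nil.
have [h' [Ph' Eh' Fh']] := HF i.
exists (h' ++ h); split; first exact: PC.
  by rewrite expsum_cat Eh Eh' addr0.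
by rewrite foxvec_cat (phiL0 Eh') scale1r Fh Fh'.
Qed.

Lemma empty_vec n (H : (fun _ : 'I_n => true) =1 xpred0) (x y : 'rV[Qt]_n) : x = y.
Proof. by apply/rowP => i; have := H i. Qed.

Definition gi n (i0 i : 'I_n) : word n := wcomm [:: (i, false); (i0, true)] [:: (i0, false)].

Lemma fox_gi n (i0 i j : 'I_n) :
  foxphi j (gi i0 i) = (1 - tvar) * ((i == j)%:R - (i0 == j)%:R).
Proof.
rewrite /gi fox_comm (phiL0 (u := [:: (i, false); (i0, true)])); last by rewrite !expsum_cons expsum_nil /lsign /= addr0 addrN.
rewrite subrr mul0r addr0 phiL1 /lsign /= expr1z; congr (_ * _).
rewrite !phiL1 /lsign /= mulr0 addr0 exprN1 expr1z.
case: (i == j); case: (i0 == j); rewrite /= ?mulr0n ?mulr1n ?mulr0 ?addr0 ?mulrN ?mulfV ?tvar_neq0 //;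
  rewrite ?add0r ?subr0 ?sub0r ?subrr //; by rewrite oppr0.
Qed.

Lemma commF_gen n (a b : word n) : commF (wcomm a b).
Proof. by apply: in_gen_gen; exists a, b. Qed.

Lemma realize_Sdiff n (x : 'rV[Qt]_n) : Sdiff x -> exists w, commF w /\ foxvec w = x.
Proof.
case: (pickP (fun _ : 'I_n => true)) => [i0 _|Hn]; last first.
  by move=> _; exists [::]; split; [exact: in_gen_nil|exact: empty_vec].
move=> [y [Ly [Sy ->]]].
have -> : (1 - tvar) *: y = \sum_(i < n) y 0 i *: foxvec (gi i0 i).
  apply/rowP => j; rewrite summxE mxE.
  under eq_bigr do rewrite mxE mxE fox_gi.
  have E : forall i, y 0 i * ((1 - tvar) * ((i == j)%:R - (i0 == j)%:R)) =
      (1 - tvar) * (y 0 i * (i == j)%:R) - ((1 - tvar) * (i0 == j)%:R) * y 0 i.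
    by move=> i; ring.
  under eq_bigr do rewrite E.
  rewrite sumrB -!mulr_sumr Sy mulr0 subr0; congr (_ * _).
  rewrite (bigD1 j) //= eqxx mulr1 big1 ?addr0 // => i /negbTE ->; exact: mulr0.
have [h [Ph _ Fh]] := realize_sum (index_enum 'I_n) (P := @commF n) (in_gen_nil _)
  (fun u v => @in_gen_cat _ _ u v) (F := fun i => y 0 i *: foxvec (gi i0 i))
  (fun i => realize i0 (in_gen_nil _) (fun u v => @in_gen_cat _ _ u v)
     (fun u a => @in_gen_pow _ _ u a) (fun x u => @commF_conj _ x u)
     (commF_gen _ _) (expsum_comm _ _) (Ly i)).
by exists h.
Qed.

Lemma nclosure_conj n nu (R : 'I_nu -> word n) x u :
  nclosure R u -> nclosure R (x ++ u ++ winv x).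
Proof.
apply: in_gen_conj => g [v [j ->]]; exists ((x ++ v) ++ R j ++ winv (x ++ v)).
  by exists (x ++ v), j.
by rewrite winv_cat -!catA.
Qed.

Lemma nclosure_gen n nu (R : 'I_nu -> word n) j : nclosure R (R j).
Proof.
apply: (in_gen_feq (u := [::] ++ R j ++ winv [::])); last by rewrite /= cats0.
by apply: in_gen_gen; exists [::], j.
Qed.

Lemma realize_Sspan n nu (R : 'I_nu -> word n) (x : 'rV[Qt]_n) :
  (forall j, expsum (R j) = 0) -> Sspan R x -> exists a, nclosure R a /\ foxvec a = x.
Proof.
move=> HR; case: (pickP (fun _ : 'I_n => true)) => [i0 _|Hn]; last first.
  by move=> _; exists [::]; split; [exact: in_gen_nil|exact: empty_vec].
move=> [c [Lc ->]].
have [h [Ph _ Fh]] := realize_sum (index_enum 'I_nu) (P := nclosure R) (in_gen_nil _)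
  (fun u v => @in_gen_cat _ _ u v) (F := fun j => c j *: foxvec (R j))
  (fun j => realize i0 (in_gen_nil _) (fun u v => @in_gen_cat _ _ u v)
     (fun u a => @in_gen_pow _ _ u a) (fun x u => @nclosure_conj _ _ R x u)
     (nclosure_gen R j) (HR j) (Lc j)).
by exists h.
Qed.

Lemma nseq_rcons T k (x : T) : nseq k x ++ [:: x] = nseq k.+1 x.
Proof. by elim: k => //= k ->. Qed.

Lemma pw_succ n (i0 : 'I_n) (z : int) :
  feq (pw i0 z ++ [:: (i0, false)]) (pw i0 (z + 1)).
Proof.
case: z => m.
  have -> : Posz m + 1 = Posz m.+1 by lia.
  by rewrite /pw nseq_rcons.
case: m => [|m].
  have -> : Negz 0 + 1 = Posz 0 by lia.
  by rewrite /feq /= eqxx.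
have -> : Negz m.+1 + 1 = Negz m by lia.
rewrite /pw -nseq_rcons -catA.
rewrite -[X in feq _ X]cats0; apply: feq_cat => //.
by rewrite /feq /= eqxx.
Qed.

Definition hw n (i0 i : 'I_n) (k : int) : word n :=
  pw i0 k ++ [:: (i, false)] ++ winv (pw i0 (k + 1)).
Definition he n (i0 : 'I_n) (e : 'I_n * int * bool) : word n :=
  if e.2 then winv (hw i0 e.1.1 e.1.2) else hw i0 e.1.1 e.1.2.
Definition HH n (i0 : 'I_n) (L : seq ('I_n * int * bool)) : word n :=
  flatten (map (he i0) L).

Fixpoint Lw n (p : int) (w : word n) : seq ('I_n * int * bool) :=
  match w with
  | [::] => [::]
  | x :: w' => (if x.2 then (x.1, p - 1, true) else (x.1, p, false)) :: Lw (p + lsign x) w'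
  end.

Lemma feq_ins n (x : letter n) P w : feq (x :: w) (x :: (winv P ++ P ++ w)).
Proof.
have H : feq w (winv P ++ P ++ w).
  rewrite catA; apply: feq_sym; apply: feq_trans (feq_cat (feq_invl _) (feq_refl _)) _; by [].
exact: (feq_cat (feq_refl [:: x]) H).
Qed.

Lemma decomp n (i0 : 'I_n) (w : word n) (p : int) :
  feq (pw i0 p ++ w) (HH i0 (Lw p w) ++ pw i0 (p + expsum w)).
Proof.
elim: w p => [|x w IH] p; first by rewrite /= cats0 expsum_nil addr0.
rewrite /HH /= -/(HH i0 (Lw (p + lsign x) w)) expsum_cons addrA -catA.
apply: feq_trans (feq_cat (feq_refl _) (IH (p + lsign x))).
case: x => i [] /=; rewrite /he /hw /=.
  rewrite winv_cat winv_cons winvK subrK /lsign /= -!catA.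
  apply: feq_cat => //; exact: feq_ins.
rewrite -!catA /lsign /=; apply: feq_cat => //; exact: feq_ins.
Qed.

Lemma expsum_hw n (i0 i : 'I_n) k : expsum (hw i0 i k) = 0.
Proof.
rewrite /hw !expsum_cat expsum_winv !expsum_pw expsum_cons expsum_nil /lsign /=. ring.
Qed.
Lemma expsum_he n (i0 : 'I_n) e : expsum (he i0 e) = 0.
Proof. rewrite /he; case: e.2; by rewrite ?expsum_winv expsum_hw ?oppr0. Qed.
Lemma expsum_HH n (i0 : 'I_n) L : expsum (HH i0 L) = 0.
Proof.
elim: L => [|e L IH]; first by rewrite expsum_nil.
by rewrite /HH /= expsum_cat expsum_he -/(HH i0 L) IH addr0.
Qed.

Lemma fox_pw n (i0 i : 'I_n) z : i0 != i -> foxphi i (pw i0 z) = 0.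
Proof.
move=> H.
have G : forall k b, foxphi i (nseq k (i0, b)) = 0.
  move=> k b; elim: k => [|k IH] //=. by rewrite IH mulr0 addr0 (negbTE H).
by case: z => k; apply: G.
Qed.

Lemma fox_hw n (i0 i j : 'I_n) k : i0 != i -> foxphi i (hw i0 j k) = (j == i)%:R * tvar ^ k.
Proof.
move=> H; rewrite /hw !foxphi_cat fox_winv !fox_pw // !mulr0 addr0 add0r phiL_pw mulrC; congr (_ * _). rewrite /= mulr0 addr0; by case: (j == i).
Qed.

Definition sgnQ (b : bool) : Qt := if b then -1 else 1.

Lemma fox_he n (i0 i : 'I_n) e : i0 != i ->
  foxphi i (he i0 e) = sgnQ e.2 * ((e.1.1 == i)%:R * tvar ^ e.1.2).
Proof.
move=> H; rewrite /he /sgnQ; case: e.2; rewrite ?mul1r ?fox_winv fox_hw //.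
by rewrite phiL0 ?expsum_hw // invr1 mulN1r.
Qed.

Lemma fox_HH n (i0 i : 'I_n) L : i0 != i ->
  foxphi i (HH i0 L) = \sum_(e <- L) sgnQ e.2 * ((e.1.1 == i)%:R * tvar ^ e.1.2).
Proof.
move=> H; elim: L => [|e L IH]; first by rewrite big_nil.
by rewrite /HH /= foxphi_cat -/(HH i0 L) IH phiL0 ?expsum_he // mul1r big_cons fox_he.
Qed.

Lemma he_i0 n (i0 : 'I_n) k b : feq (he i0 (i0, k, b)) [::].
Proof.
have E : feq (hw i0 i0 k) [::].
  rewrite /hw catA; apply: feq_trans (feq_cat (pw_succ i0 k) (feq_refl _)) _.
  exact: feq_invr.
rewrite /he /=; case: b => //; exact: (feq_winv E).
Qed.

Lemma shiftN (L : seq (int * bool)) : exists N : nat, forall f, f \in L -> 0 <= f.1 + N%:Z.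
Proof.
elim: L => [|f0 L [N HN]]; first by exists 0%N.
exists (N + absz f0.1)%N => f; rewrite inE => /orP[/eqP ->|/HN].
  case: f0.1 => m /=; lia.
case: f0.1 => m /=; lia.
Qed.

Definition sgnZ (b : bool) : int := if b then -1 else 1.

Lemma coef_cancel (e : int * bool) (L : seq (int * bool)) :
  \sum_(f <- e :: L) sgnQ f.2 * tvar ^ f.1 = 0 ->
  has (fun f => (f.1 == e.1) && (f.2 == ~~ e.2)) L.
Proof.
move=> H0; apply/negPn/negP => Hn.
have [N HN] := shiftN (e :: L).
set Q : {poly int} := \sum_(f <- e :: L) (sgnZ f.2)%:P * 'X^(absz (f.1 + N%:Z)).
have HQ : Q = 0.
  apply/eqP; rewrite -tofrac_eq0; apply/eqP.
  rewrite /Q rmorph_sum /=.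
  have -> : \sum_(f <- e :: L) tofrac ((sgnZ f.2)%:P * 'X^(absz (f.1 + N%:Z))) =
            \sum_(f <- e :: L) (sgnQ f.2 * tvar ^ f.1) * tvar ^+ N.
    apply: eq_big_seq => f Hf.
    rewrite rmorphM /= -[tofrac _]/(polyQ _) polyQ_C -[tofrac _]/(polyQ _) polyQXn.
    rewrite -mulrA; congr (_ * _); first by case: f.2.
    rewrite -[tvar ^+ _]/(tvar ^ (Posz (absz (f.1 + N%:Z)))) gez0_abs ?HN //.
    by rewrite expfzDr ?tvar_neq0.
  by rewrite -mulr_suml H0 mul0r.
set m := absz (e.1 + N%:Z).
have Hc := congr1 (fun p : {poly int} => p`_m) HQ; rewrite /= coef0 /Q coef_sum in Hc.
have Habs : forall f, f \in e :: L -> (m == absz (f.1 + N%:Z)) = (f.1 == e.1).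
  move=> f Hf; apply/eqP/eqP => [E|->] //.
  have := congr1 Posz E; rewrite !gez0_abs ?HN ?mem_head //; by move/addIr ->.
have Hs : \sum_(f <- L) ((sgnZ f.2)%:P * 'X^(absz (f.1 + N%:Z)))`_m =
          sgnZ e.2 * \sum_(f <- L) (f.1 == e.1)%:R.
  rewrite mulr_sumr.
  apply: eq_big_seq => f Hf; rewrite coefCM coefXn Habs ?inE ?Hf ?orbT //.
  case E1: (f.1 == e.1); rewrite /= ?mulr0 // mulr1.
  have : f.2 != ~~ e.2.
    apply/negP => E2; move: Hn; apply/negP; rewrite negbK; apply/hasP; exists f => //; by rewrite E1 E2.
  by case: (f.2); case: (e.2).
rewrite big_cons Hs coefCM coefXn -/m eqxx mulr1 in Hc.
have Hge : 0 <= \sum_(f <- L) ((f.1 == e.1)%:R : int) by apply: sumr_ge0 => f _; apply: ler0n.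
move: Hc Hge; set c := \sum_(f <- L) _; case: (e.2) => /=; lia.
Qed.

Lemma kerphi_he n (i0 : 'I_n) e : kerphi (he i0 e).
Proof. exact: expsum_he. Qed.
Lemma kerphi_HH n (i0 : 'I_n) L : kerphi (HH i0 L).
Proof. exact: expsum_HH. Qed.

Lemma HH_cons n (i0 : 'I_n) e L : HH i0 (e :: L) = he i0 e ++ HH i0 L.
Proof. by []. Qed.
Lemma HH_cat n (i0 : 'I_n) L1 L2 : HH i0 (L1 ++ L2) = HH i0 L1 ++ HH i0 L2.
Proof. by rewrite /HH map_cat flatten_cat. Qed.

Lemma he_pair n (i0 i : 'I_n) k b : feq (he i0 (i, k, b) ++ he i0 (i, k, ~~ b)) [::].
Proof. rewrite /he /=; case: b => /=; [exact: feq_invl|exact: feq_invr]. Qed.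

Lemma CL n (i0 : 'I_n) (L : seq ('I_n * int * bool)) :
  (forall i, i0 != i -> \sum_(e <- L) sgnQ e.2 * ((e.1.1 == i)%:R * tvar ^ e.1.2) = 0) ->
  ceq (HH i0 L) [::].
Proof.
have [m Hm] := ubnP (size L); elim: m L Hm => // m IH [|e L] Hs HL.
  exact: ceq_refl.
case: e Hs HL => [[i k] b] Hs HL.
case: (eqVneq i i0) => [Ei|Hi].
  subst i; apply: ceq_trans (ceq_feq (feq_cat (he_i0 i0 k b) (feq_refl _))) _.
  apply: IH => [|j Hj]; first by [].
  have := HL j Hj; rewrite big_cons /= (negbTE Hj) mul0r mulr0 add0r //.
have Hi' : i0 != i by rewrite eq_sym.
have Hsum := HL i Hi'.
have Hcan : \sum_(g <- (k, b) :: [seq (f.1.2, f.2) | f <- L & f.1.1 == i]) sgnQ g.2 * tvar ^ g.1 = 0.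
  rewrite big_cons big_map big_filter.
  rewrite big_cons /= eqxx mul1r in Hsum. rewrite -[RHS]Hsum /=; congr (_ + _).
  rewrite big_mkcond; apply: eq_bigr => f _ /=.
  by case: (f.1.1 == i); rewrite ?mul1r ?mul0r ?mulr0.
have := coef_cancel Hcan; rewrite has_map => /hasP[f].
rewrite mem_filter => /andP[Hfi Hf] /andP[Hfk Hfb].
move: Hfi Hfk Hfb => /= /eqP Hfi /eqP Hfk /eqP Hfb.
case/splitPr: Hf Hs HL => L1 L2 Hs HL.
have Ef : f = (i, k, ~~ b) by move: Hfi Hfk Hfb; case: (f) => [[? ?] ?] /= -> -> ->.
subst f.
rewrite HH_cons HH_cat HH_cons.
apply: (@ceq_trans _ _ ((HH i0 L1 ++ he i0 (i, k, b)) ++ (he i0 (i, k, ~~ b) ++ HH i0 L2))).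
  rewrite catA; apply: ceq_catr; exact: ceq_comm (kerphi_he _ _) (kerphi_HH _ _).
apply: (@ceq_trans _ _ (HH i0 L1 ++ HH i0 L2)).
  apply: ceq_feq; rewrite -catA; apply: feq_cat => //; rewrite catA.
  apply: feq_trans (feq_cat (he_pair _ _ _ _) (feq_refl _)) _; by [].
rewrite -HH_cat; apply: IH.
  move: Hs; rewrite /= size_cat /= size_cat /=; lia.
move=> j Hj; move: (HL j Hj) => H; rewrite -[RHS]H.
rewrite ?big_cat ?big_cons ?big_cat ?big_cons /=.
set A := \sum_(_ <- L1) _; set B := \sum_(_ <- L2) _.
rewrite /sgnQ; clear -b; case: b => /=; ring.
Qed.

Lemma inj n (w : word n) : expsum w = 0 -> foxvec w = 0 -> commK w.
Proof.
case: w => [|x w']; first by move=> _ _; exact: in_gen_nil.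
set w := x :: w' => Hw Hf.
have := decomp x.1 w 0; rewrite Hw addr0 /= cats0 => E.
apply: (in_gen_feq _ (feq_sym E)); apply: ceq_nil; apply: CL => i Hi.
rewrite -(@fox_HH _ x.1 i) // -(feq_fox i E).
by have := congr1 (fun v : 'rV[Qt]_n => v 0 i) Hf; rewrite /= !mxE.
Qed.

Lemma tz_eq1 (z : int) : tvar ^ z = 1 -> z = 0.
Proof.
have H : forall k : nat, tvar ^+ k = 1 -> k = 0%N.
  move=> k; rewrite -polyQXn -polyQ1 => /eqP; rewrite /polyQ tofrac_eq => /eqP E.
  have := congr1 (fun p : {poly int} => size p) E; rewrite /= size_polyXn size_poly1.
  by case.
case: z => k; first by move/H ->.
move=> E; have : tvar ^+ k.+1 = 1.
  by rewrite -[LHS]invrK; change ((tvar ^ Negz k)^-1 = 1); rewrite E invr1.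
by move/H.
Qed.

Lemma Sdiff_expsum n (w : word n) : Sdiff (foxvec w) -> expsum w = 0.
Proof.
move=> [y [Ly [Sy Ey]]].
have HS : \sum_(i < n) foxphi i w = 0.
  rewrite (eq_bigr (fun i => (1 - tvar) * y 0 i)); first by rewrite -mulr_sumr Sy mulr0.
  by move=> i _; have := congr1 (fun v : 'rV[Qt]_n => v 0 i) Ey; rewrite /= !mxE.
have := sum_fox w; rewrite HS mul0r => /esym /eqP; rewrite subr_eq0 => /eqP.
exact: tz_eq1.
Qed.

Lemma commK_commF n (w : word n) : commK w -> commF w.
Proof. apply: in_gen_mono => g [a [b [_ [_ ->]]]]; exact: commF_gen. Qed.

Lemma nclosure_commF n nu (R : 'I_nu -> word n) w :
  (forall j, commF (R j)) -> nclosure R w -> commF w.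
Proof.
move=> HR; apply: in_gen_mono => g [u [j ->]]; exact: commF_conj.
Qed.

Lemma fox_diff n (u v : word n) : expsum v = 0 ->
  foxvec (u ++ winv v) = foxvec u - phiL u *: foxvec v.
Proof.
move=> Hv; rewrite foxvec_cat foxvec_winv (phiL0 Hv) invr1 scaleN1r scalerN //.
Qed.

Unset Implicit Arguments.

Theorem theorem7p1 (n nu : nat) (R : 'I_nu -> word n) :
  (forall x : 'rV[Qt]_n,
     (exists c : 'I_nu -> Qt, (forall j, laurent (c j)) /\
        x = \sum_(j < nu) c j *: foxvec (R j))
     <->
     (exists y : 'rV[Qt]_n, laurent_vec y /\ \sum_(i < n) y 0 i = 0 /\
        x = (1 - tvar) *: y))
  <->
  (forall w : word n, commF w <-> NK R w).
Proof.
split => [Ha|Hb].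
- have Ha' : forall x, Sspan R x <-> Sdiff x by exact: Ha.
  have HR0 : forall j, expsum (R j) = 0.
    move=> j; apply: Sdiff_expsum; apply/Ha'; exact: Sspan_gen.
  have HRF : forall j, commF (R j).
    move=> j; have [w [Fw Ew]] := realize_Sdiff ((Ha' _).1 (Sspan_gen R j)).
    have [Ew0 _] := commF_fox Fw.
    have Hd : commK (R j ++ winv w).
      apply: inj; first by rewrite expsum_cat expsum_winv Ew0 oppr0 HR0 addr0.
      by rewrite fox_diff // phiL0 // scale1r Ew subrr.
    apply: in_gen_feq (in_gen_cat (commK_commF Hd) Fw) _; exact: feq_c1.
  move=> w; split => [Fw|[a [b [Na [Kb E]]]]].
    have [Ew Sw] := commF_fox Fw.
    have [a [Na Ea]] := realize_Sspan HR0 ((Ha' _).2 Sw).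
    have [Ea0 _] := nclosure_fox HR0 Na.
    exists a, (winv a ++ w); split => //; split.
      apply: inj; first by rewrite expsum_cat expsum_winv Ea0 oppr0 Ew addr0.
      by rewrite foxvec_cat foxvec_winv phiL_winv !phiL0 // invr1 scaleN1r scale1r Ea addNr.
    by rewrite catA; apply: feq_sym; apply: feq_trans (feq_cat (feq_invr a) (feq_refl _)) _.
  apply: in_gen_feq (in_gen_cat (nclosure_commF HRF Na) (commK_commF Kb)) (feq_sym E).
- have HRF : forall j, commF (R j).
    move=> j; apply/Hb; exists (R j), [::]; split; first exact: nclosure_gen.
    by split; [exact: in_gen_nil|rewrite cats0].
  have HR0 : forall j, expsum (R j) = 0 by move=> j; exact: (commF_fox (HRF j)).1.
  move=> x; change (Sspan R x <-> Sdiff x); split.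
    move=> Sx; have [a [Na <-]] := realize_Sspan HR0 Sx.
    exact: (commF_fox (nclosure_commF HRF Na)).2.
  move=> Dx; have [w [Fw <-]] := realize_Sdiff Dx.
  have [a [b [Na [Kb E]]]] := (Hb w).1 Fw.
  have [_ Fb] := commK_fox Kb.
  rewrite (foxvec_feq E) foxvec_cat Fb scaler0 addr0.
  exact: (nclosure_fox HR0 Na).2.
Qed.
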